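(* Let $(X,\tau_1,\tau_2)$ be a bitopological space, $i,j\in\{1,2\}$, $i\neq j$, which is $(i,j)_r$-nearly paralindelöf, $(i,j)$-almost regular and a $j$-$P$-space. Then for every cover $\{U_\alpha:\alpha\in\Delta\}$ of $X$ by $(i,j)$-regular open sets there is a $j$-locally countable cover $\{V_\alpha:\alpha\in\Delta\}$ of $X$ by $(i,j)$-regular open sets, indexed by the same set $\Delta$, such that $j\text{-}\mathrm{cl}(V_\alpha)\subseteq U_\alpha$ for every $\alpha\in\Delta$.
   Context: $(X,\tau_1,\tau_2)$ is a bitopological space and $i,j\in\{1,2\}$, $i\neq j$. For $k\in\{1,2\}$, $k\text{-}\mathrm{int}$ and $k\text{-}\mathrm{cl}$ denote interior and closure with respect to $\tau_k$; ''$k$-open'' means $\tau_k$-open. A set $A$ is $(i,j)$-regular open if $A=i\text{-}\mathrm{int}(j\text{-}\mathrm{cl}(A))$. $X$ is $(i,j)$-almost regular if for each $x\in X$ and each $(i,j)$-regular open set $U$ containing $x$ there is an $(i,j)$-regular open set $V$ with $x\in V\subseteq j\text{-}\mathrm{cl}(V)\subseteq U$. A family is a cover of $X$ if its union is $X$. A family is $k$-locally countable if every $x\in X$ has a $k$-open neighbourhood meeting at most countably many of its members. $X$ is a $k$-$P$-space if every intersection of countably many $k$-open sets is $k$-open. $X$ is $(i,j)_r$-nearly paralindelöf if every cover $\{U_\alpha:\alpha\in\Delta\}$ of $X$ by $(i,j)$-regular open sets has a $j$-locally countable cover $\{V_\beta:\beta\in B\}$ of $X$ by $(i,j)$-regular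 open sets such that for each $\beta\in B$ there is $\alpha(\beta)\in\Delta$ with $j\text{-}\mathrm{cl}(V_\beta)\subseteq U_{\alpha(\beta)}$. *)

(* Defs.v *)
From Stdlib Require Import Classical.

Definition set (X : Type) := X -> Prop.

Definition subset {X : Type} (A B : set X) : Prop := forall x, A x -> B x.
Definition set_eq {X : Type} (A B : set X) : Prop := forall x, A x <-> B x.

Definition is_topology {X : Type} (tau : set X -> Prop) : Prop :=
  tau (fun _ => True) /\
  (forall A B, tau A -> tau B -> tau (fun x => A x /\ B x)) /\
  (forall (I : Type) (F : I -> set X), (forall k, tau (F k)) ->
     tau (fun x => exists k, F k x)).

Definition btop {X : Type} (tau1 tau2 : set X -> Prop) (k : nat) : set X -> Prop :=
  if Nat.eqb k 1 then tau1 else tau2.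

Definition interior {X : Type} (tau : set X -> Prop) (A : set X) : set X :=
  fun x => exists G, tau G /\ G x /\ subset G A.

Definition closure {X : Type} (tau : set X -> Prop) (A : set X) : set X :=
  fun x => forall G, tau G -> G x -> exists y, G y /\ A y.

Definition ij_regular_open {X : Type} (taui tauj : set X -> Prop) (A : set X) : Prop :=
  set_eq A (interior taui (closure tauj A)).

Definition ij_almost_regular {X : Type} (taui tauj : set X -> Prop) : Prop :=
  forall (x : X) (U : set X), ij_regular_open taui tauj U -> U x ->
    exists V, ij_regular_open taui tauj V /\ V x /\
      subset V (closure tauj V) /\ subset (closure tauj V) U.

Definition is_cover {X I : Type} (F : I -> set X) : Prop :=
  forall x, exists k, F k x.

Definition countable_set {I : Type} (S : I -> Prop) : Prop :=
  exists f : I -> nat, forall a b, S a -> S b -> f a = f b -> a = b.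

Definition locally_countable {X I : Type} (tau : set X -> Prop) (F : I -> set X) : Prop :=
  forall x, exists G, tau G /\ G x /\
    countable_set (fun k => exists y, G y /\ F k y).

Definition P_space {X : Type} (tau : set X -> Prop) : Prop :=
  forall G : nat -> set X, (forall n, tau (G n)) -> tau (fun x => forall n, G n x).

Definition ij_r_nearly_paralindelof {X : Type} (taui tauj : set X -> Prop) : Prop :=
  forall (Delta : Type) (U : Delta -> set X),
    (forall a, ij_regular_open taui tauj (U a)) -> is_cover U ->
    exists (B : Type) (V : B -> set X),
      (forall b, ij_regular_open taui tauj (V b)) /\ is_cover V /\
      locally_countable tauj V /\
      (forall b, exists a, subset (closure tauj (V b)) (U a)).

(* Main.v *)
Require Import Defs.
From Stdlib Require Import Classical ClassicalEpsilon.

Lemma btop_top {X : Type} (t1 t2 : set X -> Prop) k :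
  is_topology t1 -> is_topology t2 -> is_topology (btop t1 t2 k).
Proof. intros H1 H2; unfold btop; destruct (Nat.eqb k 1); auto. Qed.

Lemma cl_sub {X} (t : set X -> Prop) A : subset A (closure t A).
Proof. intros x Ax G _ Gx; exists x; auto. Qed.

Lemma cl_mono {X} (t : set X -> Prop) A B : subset A B -> subset (closure t A) (closure t B).
Proof. intros AB x Hx G tG Gx. destruct (Hx G tG Gx) as [y [Gy Ay]]. exists y; auto. Qed.

Lemma cl_idem {X} (t : set X -> Prop) A : subset (closure t (closure t A)) (closure t A).
Proof.
  intros x Hx G tG Gx. destruct (Hx G tG Gx) as [y [Gy Hy]].
  exact (Hy G tG Gy).
Qed.

Lemma int_sub {X} (t : set X -> Prop) A : subset (interior t A) A.
Proof. intros x [G [_ [Gx GA]]]; auto. Qed.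

Lemma not_cl {X} (t : set X -> Prop) A x : ~ closure t A x ->
  exists G, t G /\ G x /\ forall y, G y -> ~ A y.
Proof.
  intros H. apply NNPP; intro H'. apply H. intros G tG Gx.
  apply NNPP; intro H2. apply H'. exists G; repeat split; auto.
  intros y Gy Ay. apply H2; exists y; auto.
Qed.

Lemma ro_intcl {X} (ti tj : set X -> Prop) A :
  ij_regular_open ti tj (interior ti (closure tj A)).
Proof.
  intros x; split.
  - intros [O [tO [Ox OA]]]. exists O; repeat split; auto.
    intros z Oz. apply cl_sub. exists O; repeat split; auto.
  - intros [O [tO [Ox OA]]]. exists O; repeat split; auto.
    intros z Oz. apply cl_idem. eapply cl_mono; [|apply OA; exact Oz].
    apply int_sub.
Qed.

Theorem mainTheorem11 (X : Type) (tau1 tau2 : set X -> Prop)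
  (Ht1 : is_topology tau1) (Ht2 : is_topology tau2)
  (i j : nat) (Hi : i = 1 \/ i = 2) (Hj : j = 1 \/ j = 2) (Hij : i <> j)
  (Hnp : ij_r_nearly_paralindelof (btop tau1 tau2 i) (btop tau1 tau2 j))
  (Har : ij_almost_regular (btop tau1 tau2 i) (btop tau1 tau2 j))
  (HP : P_space (btop tau1 tau2 j)) :
  forall (Delta : Type) (U : Delta -> set X),
    (forall a, ij_regular_open (btop tau1 tau2 i) (btop tau1 tau2 j) (U a)) ->
    is_cover U ->
    exists V : Delta -> set X,
      (forall a, ij_regular_open (btop tau1 tau2 i) (btop tau1 tau2 j) (V a)) /\
      is_cover V /\
      locally_countable (btop tau1 tau2 j) V /\
      (forall a, subset (closure (btop tau1 tau2 j) (V a)) (U a)).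
Proof.
  intros Delta U HU HcU.
  pose proof (btop_top tau1 tau2 j Ht1 Ht2) as Tj.
  destruct Tj as [TjT [TjI TjU]].
  remember (btop tau1 tau2 i) as ti. remember (btop tau1 tau2 j) as tj.
  destruct (Hnp Delta U HU HcU) as [B [V [HVro [HVc [HVlc HVs]]]]].
  pose (al := fun b => proj1_sig (constructive_indefinite_description _ (HVs b))).
  assert (Hal : forall b, subset (closure tj (V b)) (U (al b))).
  { intro b. unfold al. destruct (constructive_indefinite_description _ (HVs b)); auto. }
  clearbody al.
  pose (A := fun a => fun x => exists b, al b = a /\ V b x).
  assert (Key : forall a, subset (closure tj (A a)) (U a)).
  { intros a x Hx. apply NNPP; intro nU.
    destruct (HVlc x) as [G [tG [Gx [f Hf]]]].
    set (S := fun b => exists y, G y /\ V b y) in *.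
    pose (P := fun n (H : set X) => tj H /\ forall b, S b -> al b = a -> f b = n ->
                 forall w, H w -> ~ V b w).
    pose (K := fun n => fun z => exists k : {H | P n H}, proj1_sig k z).
    assert (tK : forall n, tj (K n)).
    { intro n. apply (TjU _ (fun k : {H | P n H} => proj1_sig k)). intro k; exact (proj1 (proj2_sig k)). }
    pose (W := fun z => G z /\ (fun z => forall n, K n z) z).
    assert (tW : tj W) by (apply TjI; auto).
    assert (Wx : W x).
    { split; auto. intro n.
      destruct (classic (exists b, S b /\ al b = a /\ f b = n)) as [[b [Sb [ab fb]]]|nb].
      - assert (nc : ~ closure tj (V b) x).
        { intro c. apply nU. subst a. apply Hal; auto. }
        destruct (not_cl _ _ _ nc) as [H [tH [Hx' HH]]].
        assert (PH : P n H).
        { split; auto. intros b' Sb' ab' fb' w Hw.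
          assert (b' = b) by (apply Hf; auto; congruence). subst b'. auto. }
        exists (exist _ H PH); exact Hx'.
      - assert (PH : P n (fun _ => True)).
        { split; auto. intros b' Sb' ab' fb'. exfalso; apply nb; eauto. }
        exists (exist _ _ PH); exact I. }
    destruct (Hx W tW Wx) as [y [[Gy Ky] [b [ab Vb]]]].
    destruct (Ky (f b)) as [k Hy]. pose proof (proj2 (proj2_sig k)) as PH. simpl in PH.
    eapply PH; eauto. exists y; auto. }
  exists (fun a => interior ti (closure tj (A a))).
  split; [|split; [|split]].
  - intro a. apply ro_intcl.
  - intro x. destruct (HVc x) as [b Vb]. exists (al b).
    pose proof (HVro b x) as [h _]. destruct (h Vb) as [O [tO [Ox OA]]].
    exists O; repeat split; auto. intros z Oz. eapply cl_mono; [|apply OA; exact Oz].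
    intros w Vw. exists b; auto.
  - intro x. destruct (HVlc x) as [G [tG [Gx [f Hf]]]].
    exists G; repeat split; auto.
    assert (Hm : forall a, (exists y, G y /\ interior ti (closure tj (A a)) y) ->
                 exists b, (exists y, G y /\ V b y) /\ al b = a).
    { intros a [y [Gy Iy]]. apply int_sub in Iy.
      destruct (Iy G tG Gy) as [z [Gz [b [ab Vb]]]]. exists b; split; eauto. }
    exists (fun a => match excluded_middle_informative
                      (exists b, (exists y, G y /\ V b y) /\ al b = a) with
                 | left h => f (proj1_sig (constructive_indefinite_description _ h))
                 | right _ => 0 end).
    intros a1 a2 H1 H2 Heq.
    apply Hm in H1; apply Hm in H2.
    destruct (excluded_middle_informative _) as [h1|n1]; [|contradiction].
    destruct (excluded_middle_informative _) as [h2|n2]; [|contradiction].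
    destruct (constructive_indefinite_description _ h1) as [b1 [S1 e1]].
    destruct (constructive_indefinite_description _ h2) as [b2 [S2 e2]].
    simpl in Heq. assert (b1 = b2) by (apply Hf; auto). subst. reflexivity.
  - intros a x Hx. apply Key. apply cl_idem. eapply cl_mono; [|exact Hx].
    apply int_sub.
Qed.
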